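(* Let $I$ be a non-degenerate interval, $f:I\to\mathbb{R}$ continuous and $c\ge1$. (i) If the graph of $f$ is $c$-monotone, then $f$ satisfies condition $\mathsf{P}_c$. (ii) If $f$ satisfies condition $\mathsf{P}_{c-1}$, then the graph of $f$ is symmetrically $c$-monotone.
   Context: For $a\ge0$, $f$ satisfies condition $\mathsf{P}_a$ if $\max_{x\le t\le y}|f(x)-f(t)|\le a|x-y|$ whenever $x<y$ in $I$ and $f(x)=f(y)$. A metric space $(X,d)$ is $c$-monotone if there is a linear order $<$ with $d(x,y)\le c\,d(x,z)$ whenever $x<y<z$, and symmetrically $c$-monotone if there is a linear order $<$ with $\max(d(x,y),d(y,z))\le c\,d(x,z)$ whenever $x<y<z$. The graph $\{(x,f(x)):x\in I\}$ carries the Euclidean metric. *)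

(* Defs.v *)
From Stdlib Require Import Reals Lra.
Open Scope R_scope.

Definition is_interval (I : R -> Prop) : Prop :=
  forall x y t, I x -> I y -> x <= t <= y -> I t.

Definition nondegenerate (I : R -> Prop) : Prop :=
  exists a b, I a /\ I b /\ a < b.

Definition continuous_on (I : R -> Prop) (f : R -> R) : Prop :=
  forall x, I x -> forall eps, 0 < eps ->
    exists delta, 0 < delta /\
      forall y, I y -> Rabs (y - x) < delta -> Rabs (f y - f x) < eps.

(* Condition P_a: the max over [x,y] of |f x - f t| is <= a |x - y|,
   written as a bound on every t in [x,y]. *)
Definition cond_P (I : R -> Prop) (f : R -> R) (a : R) : Prop :=
  forall x y, I x -> I y -> x < y -> f x = f y ->
    forall t, x <= t <= y -> Rabs (f x - f t) <= a * Rabs (x - y).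

Definition dist2 (p q : R * R) : R :=
  sqrt ((fst p - fst q) ^ 2 + (snd p - snd q) ^ 2).

Definition graph (I : R -> Prop) (f : R -> R) (p : R * R) : Prop :=
  exists x, I x /\ p = (x, f x).

Definition strict_linear_order_on {T : Type} (X : T -> Prop) (lt : T -> T -> Prop) : Prop :=
  (forall x, X x -> ~ lt x x) /\
  (forall x y z, X x -> X y -> X z -> lt x y -> lt y z -> lt x z) /\
  (forall x y, X x -> X y -> x <> y -> lt x y \/ lt y x).

Definition c_monotone (X : R * R -> Prop) (c : R) : Prop :=
  exists lt, strict_linear_order_on X lt /\
    forall x y z, X x -> X y -> X z -> lt x y -> lt y z ->
      dist2 x y <= c * dist2 x z.

Definition sym_c_monotone (X : R * R -> Prop) (c : R) : Prop :=
  exists lt, strict_linear_order_on X lt /\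
    forall x y z, X x -> X y -> X z -> lt x y -> lt y z ->
      Rmax (dist2 x y) (dist2 y z) <= c * dist2 x z.

(* Main.v *)
Require Import Defs.
From Stdlib Require Import Reals Lra Classical.
Open Scope R_scope.

Lemma sqrt_sum_le_abs a b : sqrt (a^2+b^2) <= Rabs a + Rabs b.
Proof.
  pose proof (Rabs_pos a); pose proof (Rabs_pos b).
  rewrite <- (sqrt_square (Rabs a + Rabs b)) by lra.
  apply sqrt_le_1_alt. rewrite <- (pow2_abs a), <- (pow2_abs b). nra.
Qed.

Lemma abs_le_sqrt a b : Rabs a <= sqrt (a^2 + b^2).
Proof.
  rewrite <- (sqrt_pow2 (Rabs a)) by apply Rabs_pos.
  apply sqrt_le_1_alt. rewrite pow2_abs. pose proof (pow2_ge_0 b). lra.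
Qed.

Lemma sqrt_mono2 a b a' b' : Rabs a <= Rabs a' -> Rabs b <= Rabs b' ->
  sqrt (a^2+b^2) <= sqrt (a'^2+b'^2).
Proof.
  intros h1 h2. apply sqrt_le_1_alt.
  rewrite <- (pow2_abs a), <- (pow2_abs b), <- (pow2_abs a'), <- (pow2_abs b').
  pose proof (Rabs_pos a); pose proof (Rabs_pos b). nra.
Qed.

Lemma sqrt_tri a b c d : sqrt ((a+b)^2+(c+d)^2) <= sqrt (a^2+c^2) + sqrt (b^2+d^2).
Proof.
  assert (h1 : 0 <= a^2+c^2) by nra. assert (h2 : 0 <= b^2+d^2) by nra.
  pose proof (sqrt_sqrt _ h1) as e1. pose proof (sqrt_sqrt _ h2) as e2.
  pose proof (sqrt_pos (a^2+c^2)) as p1. pose proof (sqrt_pos (b^2+d^2)) as p2.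
  set (S1 := sqrt (a^2+c^2)) in *. set (S2 := sqrt (b^2+d^2)) in *.
  rewrite <- (sqrt_square (S1+S2)) by lra. apply sqrt_le_1_alt.
  assert (hw : 0 <= S1*S2) by nra.
  assert (hsq : (a*b+c*d)*(a*b+c*d) <= (S1*S2)*(S1*S2)).
  { replace ((S1*S2)*(S1*S2)) with ((S1*S1)*(S2*S2)) by ring. rewrite e1, e2.
    pose proof (pow2_ge_0 (a*d - b*c)). nra. }
  assert (a*b+c*d <= S1*S2) by nra.
  nra.
Qed.

Lemma dist2_ge0 p q : 0 <= dist2 p q.
Proof. unfold dist2; apply sqrt_pos. Qed.

Lemma dist2_sym p q : dist2 p q = dist2 q p.
Proof. unfold dist2. f_equal. ring. Qed.

Lemma dist2_refl p : dist2 p p = 0.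
Proof. unfold dist2. replace ((fst p - fst p)^2 + (snd p - snd p)^2) with 0 by ring. apply sqrt_0. Qed.

Lemma dist2_eq0 p q : dist2 p q = 0 -> p = q.
Proof.
  destruct p as [p1 p2], q as [q1 q2]; unfold dist2; simpl; intro h.
  apply sqrt_eq_0 in h; [|pose proof (pow2_ge_0 (p1-q1)); pose proof (pow2_ge_0 (p2-q2)); lra].
  pose proof (pow2_ge_0 (p1-q1)); pose proof (pow2_ge_0 (p2-q2)).
  assert (e1 : (p1-q1)*(p1-q1) = 0) by nra. assert (e2 : (p2-q2)*(p2-q2) = 0) by nra.
  apply Rmult_integral in e1; apply Rmult_integral in e2.
  assert (p1 = q1) by (destruct e1; lra). assert (p2 = q2) by (destruct e2; lra).
  subst; reflexivity.
Qed.

Lemma dist2_tri p q r : dist2 p r <= dist2 p q + dist2 q r.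
Proof.
  destruct p as [p1 p2], q as [q1 q2], r as [r1 r2]; unfold dist2; simpl.
  replace (p1 - r1) with ((p1-q1)+(q1-r1)) by ring.
  replace (p2 - r2) with ((p2-q2)+(q2-r2)) by ring.
  apply sqrt_tri.
Qed.

Lemma dist2_le_sum p q : dist2 p q <= Rabs (fst p - fst q) + Rabs (snd p - snd q).
Proof. apply sqrt_sum_le_abs. Qed.

Lemma dist2_ge1 p q : Rabs (fst p - fst q) <= dist2 p q.
Proof. apply abs_le_sqrt. Qed.

Lemma dist2_ge2 p q : Rabs (snd p - snd q) <= dist2 p q.
Proof. unfold dist2. rewrite Rplus_comm. apply abs_le_sqrt. Qed.

Lemma dist2_mono p q p' q' : Rabs (fst p - fst q) <= Rabs (fst p' - fst q') ->
  Rabs (snd p - snd q) <= Rabs (snd p' - snd q') -> dist2 p q <= dist2 p' q'.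
Proof. intros; apply sqrt_mono2; auto. Qed.

Lemma ivt_inc (I : R -> Prop) f a b v : a <= b -> (forall s, a <= s <= b -> I s) ->
  continuous_on I f -> f a <= v -> v <= f b -> exists s, a <= s <= b /\ f s = v.
Proof.
  intros hab hI hc ha hb.
  set (E := fun s => a <= s <= b /\ f s <= v).
  assert (bE : bound E) by (exists b; intros s [[_ H] _]; exact H).
  assert (exE : exists s, E s) by (exists a; split; [lra|auto]).
  destruct (completeness E bE exE) as [ss [ub lub]].
  assert (hss : a <= ss <= b).
  { split. apply ub; split; [lra|auto]. apply lub. intros s [[_ H] _]; exact H. }
  exists ss; split; auto.
  destruct (Rtotal_order (f ss) v) as [hl|[he|hg]]; auto; exfalso.
  - assert (ss < b). { destruct (Req_dec ss b) as [e|n]; [subst; lra| lra]. }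
    destruct (hc ss (hI ss hss) (v - f ss)) as [d [hd hdc]]; [lra|].
    set (s' := Rmin b (ss + d/2)).
    assert (hs' : ss < s' <= b) by (unfold s', Rmin; destruct Rle_dec; lra).
    assert (hs'd : Rabs (s' - ss) < d) by (unfold s', Rmin in *; destruct Rle_dec; split_Rabs; lra).
    assert (hin : a <= s' <= b) by lra.
    specialize (hdc s' (hI s' hin) hs'd).
    assert (E s') by (split; auto; split_Rabs; lra).
    specialize (ub s' H0). lra.
  - destruct (hc ss (hI ss hss) (f ss - v)) as [d [hd hdc]]; [lra|].
    assert (ss <= ss - d); [|lra].
    apply lub. intros s [hs hfs].
    destruct (Rle_lt_dec s (ss - d)) as [h|h]; auto.
    specialize (ub s (conj hs hfs)).
    assert (Rabs (s - ss) < d) by (split_Rabs; lra).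
    specialize (hdc s (hI s hs) H). split_Rabs; lra.
Qed.

Lemma ivt_dec (I : R -> Prop) f a b v : a <= b -> (forall s, a <= s <= b -> I s) ->
  continuous_on I f -> v <= f a -> f b <= v -> exists s, a <= s <= b /\ f s = v.
Proof.
  intros hab hI hc ha hb.
  destruct (ivt_inc I (fun t => - f t) a b (-v)) as [s [hs e]]; auto; try lra.
  - intros x Ix eps heps. destruct (hc x Ix eps heps) as [d [hd h]].
    exists d; split; auto. intros y Iy hy. specialize (h y Iy hy).
    replace (- f y - - f x) with (-(f y - f x)) by ring. rewrite Rabs_Ropp; auto.
  - exists s; split; auto. lra.
Qed.

Lemma path_cross (g : R -> R*R) (m : R*R) (a b c : R) (A B : R -> Prop) :
  a <= b -> 0 < c ->
  (forall s, a <= s <= b -> A s \/ B s) -> A a -> B b ->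
  (forall s, a <= s <= b -> g s <> m) ->
  (forall s0, a <= s0 <= b -> forall eps, 0 < eps -> exists delta, 0 < delta /\
     forall s, a <= s <= b -> Rabs (s - s0) < delta -> dist2 (g s) (g s0) < eps) ->
  (forall s s', a <= s <= b -> a <= s' <= b -> A s -> B s' ->
     dist2 (g s) m <= c * dist2 (g s) (g s') \/ dist2 (g s') m <= c * dist2 (g s') (g s)) ->
  False.
Proof.
  intros hab hc hAB hAa hBb hne hcont hkey.
  set (E := fun s => a <= s <= b /\ A s).
  assert (bE : bound E) by (exists b; intros s [[_ H] _]; exact H).
  assert (exE : exists s, E s) by (exists a; split; [lra|auto]).
  destruct (completeness E bE exE) as [ss [ub lub]].
  assert (hss : a <= ss <= b).
  { split. apply ub; split; [lra|auto]. apply lub. intros s [[_ H] _]; exact H. }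
  set (w := g ss).
  assert (he0 : 0 < dist2 w m).
  { destruct (dist2_ge0 w m) as [h|h]; auto. exfalso. apply (hne ss hss).
    apply dist2_eq0; auto. }
  set (eta := dist2 w m / (2*c+1)).
  assert (heta: 0 < eta) by (unfold eta; apply Rdiv_lt_0_compat; lra).
  assert (heq : eta * (2*c+1) = dist2 w m) by (unfold eta; field; lra).
  destruct (hcont ss hss eta heta) as [d [hd hdc]].
  assert (exists s s', a <= s <= b /\ a <= s' <= b /\ A s /\ B s' /\
            Rabs (s-ss) < d /\ Rabs (s'-ss) < d) as [s [s' [hs [hs' [hA [hB [h1 h2]]]]]]].
  { destruct (hAB ss hss) as [HA|HB].
    - destruct (Req_dec ss b) as [e|n].
      + exists ss, ss. rewrite e in *. repeat split; auto; try lra;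
        rewrite Rminus_diag, Rabs_R0; auto.
      + set (s' := Rmin b (ss + d/2)).
        assert (hs' : ss < s' <= b).
        { unfold s', Rmin; destruct Rle_dec; lra. }
        assert (hs'd : Rabs (s' - ss) < d) by (unfold s', Rmin in *; destruct Rle_dec; split_Rabs; lra).
        assert (hin : a <= s' <= b) by lra.
        exists ss, s'. repeat split; auto; try lra.
        * destruct (hAB s' hin) as [h|h]; auto. exfalso.
          specialize (ub s' (conj hin h)). lra.
        * rewrite Rminus_diag, Rabs_R0; auto.
    - destruct (classic (exists s, E s /\ ss - d < s)) as [[s [[hs hA] hl]]|hn].
      + exists s, ss. specialize (ub s (conj hs hA)).
        repeat split; auto; try lra.
        * split_Rabs; lra.
        * rewrite Rminus_diag, Rabs_R0; auto.
      + exfalso. assert (ss <= ss - d); [|lra].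
        apply lub. intros s Es. destruct (Rle_lt_dec s (ss - d)) as [h|h]; auto.
        exfalso; apply hn; eauto. }
  pose proof (hdc s hs h1) as d1. pose proof (hdc s' hs' h2) as d2.
  fold w in d1, d2.
  assert (hss' : dist2 (g s) (g s') < 2 * eta).
  { pose proof (dist2_tri (g s) w (g s')). rewrite (dist2_sym w (g s')) in H. lra. }
  assert (hss'2 : dist2 (g s') (g s) < 2 * eta) by (rewrite dist2_sym; lra).
  destruct (hkey s s' hs hs' hA hB) as [k|k].
  - pose proof (dist2_tri w (g s) m). rewrite (dist2_sym w (g s)) in H.
    assert (c * dist2 (g s) (g s') < c * (2*eta)) by (apply Rmult_lt_compat_l; lra).
    nra.
  - pose proof (dist2_tri w (g s') m). rewrite (dist2_sym w (g s')) in H.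
    assert (c * dist2 (g s') (g s) < c * (2*eta)) by (apply Rmult_lt_compat_l; lra).
    nra.
Qed.

Lemma g_cont (I : R -> Prop) f a b : (forall s, a <= s <= b -> I s) -> continuous_on I f ->
  forall s0, a <= s0 <= b -> forall eps, 0 < eps -> exists delta, 0 < delta /\
     forall s, a <= s <= b -> Rabs (s - s0) < delta ->
     dist2 ((fun t => (t, f t)) s) ((fun t => (t, f t)) s0) < eps.
Proof.
  intros hI hc s0 hs0 eps heps.
  destruct (hc s0 (hI s0 hs0) (eps/2)) as [d [hd h]]; [lra|].
  exists (Rmin d (eps/2)); split.
  - unfold Rmin; destruct Rle_dec; lra.
  - intros s hs hsd. pose proof (dist2_le_sum (s, f s) (s0, f s0)). simpl in *.
    assert (Rabs (s - s0) < d) by (unfold Rmin in hsd; destruct Rle_dec; lra).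
    assert (Rabs (s - s0) < eps/2) by (unfold Rmin in hsd; destruct Rle_dec; lra).
    specialize (h s (hI s hs) H0). lra.
Qed.

Lemma part1 (I : R -> Prop) (f : R -> R) (c : R) :
  is_interval I -> continuous_on I f -> 1 <= c ->
  c_monotone (graph I f) c -> cond_P I f c.
Proof.
  intros hI hc hc1 [lt [[irr [trans tot]] mono]] x y Ix Iy hxy hfe t ht.
  assert (hab : 0 <= Rabs (x - y)) by apply Rabs_pos.
  destruct (Req_dec t x) as [e|n1].
  { subst. rewrite Rminus_diag, Rabs_R0. nra. }
  destruct (Req_dec t y) as [e|n2].
  { subst. rewrite hfe, Rminus_diag, Rabs_R0. nra. }
  assert (hxt : x < t < y) by lra.
  set (g := fun s => (s, f s)).
  assert (hG : forall s, x <= s <= y -> graph I f (g s)).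
  { intros s hs. exists s; split; auto. apply (hI x y s); auto. }
  assert (hIs : forall s, x <= s <= y -> I s) by (intros; apply (hI x y); auto).
  assert (gx : graph I f (g x)) by (apply hG; lra).
  assert (gy : graph I f (g y)) by (apply hG; lra).
  assert (gt : graph I f (g t)) by (apply hG; lra).
  assert (hpr : dist2 (g x) (g y) <= Rabs (x - y)).
  { pose proof (dist2_le_sum (g x) (g y)). simpl in H. rewrite hfe, Rminus_diag, Rabs_R0 in H. lra. }
  assert (hpq : Rabs (f x - f t) <= dist2 (g x) (g t)) by apply (dist2_ge2 (g x) (g t)).
  assert (hrq : Rabs (f x - f t) <= dist2 (g y) (g t)) by (rewrite hfe; apply (dist2_ge2 (g y) (g t))).
  assert (gneq : forall s s', s <> s' -> g s <> g s') by (intros s s' h e; apply h; injection e; auto).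
  assert (hc0 : 0 < c) by lra.
  assert (contA : forall a b, x <= a -> b <= y -> forall s0, a <= s0 <= b -> forall eps, 0 < eps ->
      exists delta, 0 < delta /\ forall s, a <= s <= b -> Rabs (s - s0) < delta -> dist2 (g s) (g s0) < eps).
  { intros a b ha hb. apply (g_cont I f a b); auto. intros; apply hIs; lra. }
  destruct (tot (g x) (g y) gx gy (gneq x y ltac:(lra))) as [pr|rp].
  - destruct (tot (g x) (g t) gx gt (gneq x t ltac:(lra))) as [pq|qp].
    + destruct (tot (g t) (g y) gt gy (gneq t y ltac:(lra))) as [qr|rq].
      * pose proof (mono _ _ _ gx gt gy pq qr).
        assert (c * dist2 (g x) (g y) <= c * Rabs (x-y)) by (apply Rmult_le_compat_l; lra). lra.
      * exfalso. apply (path_cross g (g y) x t c (fun s => lt (g s) (g y)) (fun s => lt (g y) (g s)));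
          auto; try lra.
        -- intros s hs. apply tot; auto. apply hG; lra. apply gneq; lra.
        -- intros s hs. apply gneq; lra.
        -- apply contA; lra.
        -- intros s s' hs hs' hA hB. left. apply mono; auto; apply hG; lra.
    + exfalso. apply (path_cross g (g x) t y c (fun s => lt (g s) (g x)) (fun s => lt (g x) (g s)));
        auto; try lra.
      -- intros s hs. apply tot; auto. apply hG; lra. apply gneq; lra.
      -- intros s hs. apply gneq; lra.
      -- apply contA; lra.
      -- intros s s' hs hs' hA hB. left. apply mono; auto; apply hG; lra.
  - destruct (tot (g y) (g t) gy gt (gneq y t ltac:(lra))) as [rq|qr].
    + destruct (tot (g t) (g x) gt gx (gneq t x ltac:(lra))) as [qp|pq].
      * pose proof (mono _ _ _ gy gt gx rq qp). rewrite (dist2_sym (g y) (g x)) in H.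
        assert (c * dist2 (g x) (g y) <= c * Rabs (x-y)) by (apply Rmult_le_compat_l; lra). lra.
      * exfalso. apply (path_cross g (g x) t y c (fun s => lt (g x) (g s)) (fun s => lt (g s) (g x)));
          auto; try lra.
        -- intros s hs. apply tot; auto. apply hG; lra. apply gneq; lra.
        -- intros s hs. apply gneq; lra.
        -- apply contA; lra.
        -- intros s s' hs hs' hA hB. right. apply mono; auto; apply hG; lra.
    + exfalso. apply (path_cross g (g y) x t c (fun s => lt (g y) (g s)) (fun s => lt (g s) (g y)));
        auto; try lra.
      -- intros s hs. apply tot; auto. apply hG; lra. apply gneq; lra.
      -- intros s hs. apply gneq; lra.
      -- apply contA; lra.
      -- intros s s' hs hs' hA hB. right. apply mono; auto; apply hG; lra.
Qed.

Lemma sym_core x y z fx fy fz v c : x < y < z -> 1 <= c ->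
  (fx <= v <= fz \/ fz <= v <= fx) -> Rabs (fy - v) <= (c-1)*(z-x) ->
  Rmax (dist2 (x,fx) (y,fy)) (dist2 (y,fy) (z,fz)) <= c * dist2 (x,fx) (z,fz).
Proof.
  intros hxyz hc hv hfy.
  set (D := dist2 (x,fx) (z,fz)).
  assert (hD : z - x <= D).
  { pose proof (dist2_ge1 (x,fx) (z,fz)). simpl in H. unfold D. split_Rabs; lra. }
  assert (h1 : dist2 (x,fx) (y,v) <= D).
  { apply dist2_mono; simpl; split_Rabs; lra. }
  assert (h2 : dist2 (y,v) (z,fz) <= D).
  { apply dist2_mono; simpl; split_Rabs; lra. }
  assert (h3 : dist2 (y,v) (y,fy) <= Rabs (fy - v)).
  { pose proof (dist2_le_sum (y,v) (y,fy)). simpl in H. rewrite Rminus_diag, Rabs_R0 in H.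
    rewrite Rabs_minus_sym in H. lra. }
  pose proof (dist2_tri (x,fx) (y,v) (y,fy)).
  pose proof (dist2_tri (y,fy) (y,v) (z,fz)). rewrite (dist2_sym (y,fy) (y,v)) in H0.
  apply Rmax_lub; nra.
Qed.

Lemma part2 (I : R -> Prop) (f : R -> R) (c : R) :
  is_interval I -> continuous_on I f -> 1 <= c ->
  cond_P I f (c - 1) -> sym_c_monotone (graph I f) c.
Proof.
  intros hI hc hc1 hP. exists (fun p q => fst p < fst q). split.
  { split; [|split].
    - intros; lra.
    - intros; lra.
    - intros p q [x [Ix ->]] [y [Iy ->]] hne; simpl.
      destruct (Rtotal_order x y) as [h|[e|h]]; auto. subst; contradiction. }
  intros p q r [x [Ix ->]] [y [Iy ->]] [z [Iz ->]]; simpl; intros hxy hyz.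
  assert (hIs : forall s, x <= s <= z -> I s) by (intros; apply (hI x z); auto).
  assert (hc0 : 0 <= c - 1) by lra.
  destruct (Rle_dec (f x) (f z)) as [hle|hgt].
  - destruct (Rlt_dec (f z) (f y)) as [h1|h1].
    + destruct (ivt_inc I f x y (f z)) as [s [hs e]]; auto; try lra.
      { intros; apply hIs; lra. }
      apply (sym_core x y z (f x) (f y) (f z) (f z) c); auto; try lra.
      pose proof (hP s z (hIs s ltac:(lra)) Iz ltac:(lra) e y ltac:(lra)).
      rewrite e, Rabs_minus_sym in H.
      assert ((c-1) * Rabs (s - z) <= (c-1)*(z-x)) by (apply Rmult_le_compat_l; auto; split_Rabs; lra).
      lra.
    + destruct (Rlt_dec (f y) (f x)) as [h2|h2].
      * destruct (ivt_inc I f y z (f x)) as [s [hs e]]; auto; try lra.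
        { intros; apply hIs; lra. }
        apply (sym_core x y z (f x) (f y) (f z) (f x) c); auto; try lra.
        pose proof (hP x s Ix (hIs s ltac:(lra)) ltac:(lra) (eq_sym e) y ltac:(lra)).
        rewrite Rabs_minus_sym in H.
        assert ((c-1) * Rabs (x - s) <= (c-1)*(z-x)) by (apply Rmult_le_compat_l; auto; split_Rabs; lra).
        lra.
      * apply (sym_core x y z (f x) (f y) (f z) (f y) c); auto; try lra.
        rewrite Rminus_diag, Rabs_R0. nra.
  - destruct (Rlt_dec (f x) (f y)) as [h1|h1].
    + destruct (ivt_dec I f y z (f x)) as [s [hs e]]; auto; try lra.
      { intros; apply hIs; lra. }
      apply (sym_core x y z (f x) (f y) (f z) (f x) c); auto; try lra.
      pose proof (hP x s Ix (hIs s ltac:(lra)) ltac:(lra) (eq_sym e) y ltac:(lra)).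
      rewrite Rabs_minus_sym in H.
      assert ((c-1) * Rabs (x - s) <= (c-1)*(z-x)) by (apply Rmult_le_compat_l; auto; split_Rabs; lra).
      lra.
    + destruct (Rlt_dec (f y) (f z)) as [h2|h2].
      * destruct (ivt_dec I f x y (f z)) as [s [hs e]]; auto; try lra.
        { intros; apply hIs; lra. }
        apply (sym_core x y z (f x) (f y) (f z) (f z) c); auto; try lra.
        pose proof (hP s z (hIs s ltac:(lra)) Iz ltac:(lra) e y ltac:(lra)).
        rewrite e, Rabs_minus_sym in H.
        assert ((c-1) * Rabs (s - z) <= (c-1)*(z-x)) by (apply Rmult_le_compat_l; auto; split_Rabs; lra).
        lra.
      * apply (sym_core x y z (f x) (f y) (f z) (f y) c); auto; try lra.
        rewrite Rminus_diag, Rabs_R0. nra.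
Qed.

Theorem lemma2p3 (I : R -> Prop) (f : R -> R) (c : R) :
  is_interval I -> nondegenerate I -> continuous_on I f -> 1 <= c ->
  (c_monotone (graph I f) c -> cond_P I f c) /\
  (cond_P I f (c - 1) -> sym_c_monotone (graph I f) c).
Proof.
  intros hI _ hc hc1. split.
  - apply part1; auto.
  - apply part2; auto.
Qed.
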